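(* For every positive integer $k$, $$E_{2k}\left(\tau+\tfrac{1}{2}\right)=-E_{2k}(\tau)+(2^{2k}+2)E_{2k}(2\tau)-2^{2k}E_{2k}(4\tau).$$ For $p=3$ or $11$ and every integer $k\ge0$, \begin{align*} E_{2k+1}^{0}\left(\tau+\tfrac{1}{2};\chi_{p}\right)&=-E_{2k+1}^{0}(\tau;\chi_{p})+(2^{2k+1}-2)E_{2k+1}^{0}(2\tau;\chi_{p})+2^{2k+1}E_{2k+1}^{0}(4\tau;\chi_{p}),\\ E_{2k+1}^{\infty}\left(\tau+\tfrac{1}{2};\chi_{p}\right)&=-E_{2k+1}^{\infty}(\tau;\chi_{p})+(2-2^{2k+1})E_{2k+1}^{\infty}(2\tau;\chi_{p})+2^{2k+1}E_{2k+1}^{\infty}(4\tau;\chi_{p}). \end{align*} For $p=7$ or $23$ and every integer $k\ge0$, \begin{align*} E_{2k+1}^{0}\left(\tau+\tfrac{1}{2};\chi_{p}\right)&=-E_{2k+1}^{0}(\tau;\chi_{p})+(2^{2k+1}+2)E_{2k+1}^{0}(2\tau;\chi_{p})-2^{2k+1}E_{2k+1}^{0}(4\tau;\chi_{p}),\\ E_{2k+1}^{\infty}\left(\tau+\tfrac{1}{2};\chi_{p}\right)&=-E_{2k+1}^{\infty}(\tau;\chi_{p})+(2^{2k+1}+2)E_{2k+1}^{\infty}(2\tau;\chi_{p})-2^{2k+1}E_{2k+1}^{\infty}(4\tau;\chi_{p}). \end{align*}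
   Context: $\tau$ lies in the complex upper half-plane and $q=e^{2\pi i\tau}$. Bernoulli numbers $\mathcal{B}_k$: $\frac{u}{e^u-1}=\sum_{k\ge0}\mathcal{B}_k\frac{u^k}{k!}$. For $k\ge1$, $E_{2k}(\tau)=1-\frac{4k}{\mathcal{B}_{2k}}\sum_{j=1}^{\infty}\frac{j^{2k-1}q^{j}}{1-q^{j}}$. For an odd prime $p$ let $\chi_p(j)=\left(\frac{j}{p}\right)$ (Legendre symbol), and define generalized Bernoulli numbers $\mathcal{B}_{k,p}$ by $\frac{x}{e^{px}-1}\sum_{j=1}^{p-1}\chi_p(j)e^{jx}=\sum_{k\ge0}\mathcal{B}_{k,p}\frac{x^k}{k!}$. For a positive integer $k$ with $k\equiv\frac{p-1}{2}\pmod 2$ set $$E_{k}^{0}(\tau;\chi_{p})=\delta_{k,1}-\frac{2k}{\mathcal{B}_{k,p}}\sum_{j=1}^{\infty}\frac{j^{k-1}}{1-q^{pj}}\sum_{\ell=1}^{p-1}\left(\frac{\ell}{p}\right)q^{j\ell},\qquad E_{k}^{\infty}(\tau;\chi_{p})=1-\frac{2k}{\mathcal{B}_{k,p}}\sum_{j=1}^{\infty}\left(\frac{j}{p}\right)\frac{j^{k-1}q^{j}}{1-q^{j}},$$ with $\delta$ the Kronecker delta. (For $p\in\{3,7,11,23\}$, $\frac{p-1}{2}$ is odd, so these are defined for all odd $k$.) *)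

(* Defs.v *)
From Stdlib Require Import Reals List Arith.
From Coquelicot Require Import Coquelicot.
Import ListNotations.
Open Scope R_scope.

Definition binomR (n k : nat) : R :=
  INR (fact n) / (INR (fact k) * INR (fact (n - k))).

Definition rsum (a n : nat) (f : nat -> R) : R :=
  fold_right Rplus 0 (map f (seq a n)).

Definition csum (a n : nat) (f : nat -> C) : C :=
  fold_right Cplus (RtoC 0) (map f (seq a n)).

(* Bernoulli numbers with u/(e^u-1) = sum B_k u^k/k!.  Comparing coefficients
   of u^(n+1) in (e^u - 1) * (sum B_k u^k/k!) = u gives B_0 = 1 and
   sum_{j=0}^{n} C(n+1,j) B_j = 0 for n >= 1.  bern_upto n = [B_0; ...; B_n]. *)
Fixpoint bern_upto (n : nat) : list R :=
  match n with
  | O => [1]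
  | S m =>
      let l := bern_upto m in
      l ++ [ - / INR (S n) * rsum 0 n (fun j => binomR (S n) j * nth j l 0) ]
  end.

Definition bernoulli (k : nat) : R := nth k (bern_upto k) 0.

Definition legendre (p j : nat) : R :=
  if Nat.eqb (j mod p) 0 then 0
  else if existsb (fun x => Nat.eqb ((x * x) mod p) (j mod p)) (seq 1 (p - 1))
       then 1 else -1.

(* Generalized Bernoulli numbers B_{k,p}:
   x/(e^{px}-1) * sum_{j=1}^{p-1} chi_p(j) e^{jx} = sum_k B_{k,p} x^k/k!.
   Since x/(e^{px}-1) = sum_m B_m p^(m-1) x^m/m! and e^{jx} = sum_n j^n x^n/n!,
   the Cauchy product gives
   B_{k,p} = sum_{j=1}^{p-1} chi_p(j) sum_{m=0}^{k} C(k,m) B_m p^(m-1) j^(k-m). *)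
Definition bernoulli_chi (k p : nat) : R :=
  rsum 1 (p - 1) (fun j =>
    legendre p j *
    rsum 0 (S k) (fun m =>
      binomR k m * bernoulli m * (INR p ^ m / INR p) * INR j ^ (k - m))).

(* q = e^{2 pi i tau} = e^{-2 pi Im tau} (cos (2 pi Re tau) + i sin (2 pi Re tau)). *)
Definition qC (tau : C) : C :=
  Cmult (RtoC (exp (- (2 * PI * Im tau))))
        (cos (2 * PI * Re tau), sin (2 * PI * Re tau)).

(* Sum of a complex series sum_{n>=0} a n (real and imaginary parts summed
   separately; this is the usual sum whenever the series converges). *)
Definition CSeries (a : nat -> C) : C :=
  (Series (fun n => Re (a n)), Series (fun n => Im (a n))).

Definition Eis (w : nat) (tau : C) : C :=
  let q := qC tau in
  Cminus (RtoC 1)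
    (Cmult (RtoC (2 * INR w / bernoulli w))
      (CSeries (fun n => let j := S n in
         Cdiv (Cmult (RtoC (INR j ^ (w - 1))) (Cpow q j))
              (Cminus (RtoC 1) (Cpow q j))))).

Definition Eis0 (k p : nat) (tau : C) : C :=
  let q := qC tau in
  Cminus (RtoC (if Nat.eqb k 1 then 1 else 0))
    (Cmult (RtoC (2 * INR k / bernoulli_chi k p))
      (CSeries (fun n => let j := S n in
         Cmult (Cdiv (RtoC (INR j ^ (k - 1))) (Cminus (RtoC 1) (Cpow q (p * j))))
               (csum 1 (p - 1) (fun l => Cmult (RtoC (legendre p l)) (Cpow q (j * l))))))).

Definition EisInf (k p : nat) (tau : C) : C :=
  let q := qC tau in
  Cminus (RtoC 1)
    (Cmult (RtoC (2 * INR k / bernoulli_chi k p))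
      (CSeries (fun n => let j := S n in
         Cdiv (Cmult (RtoC (legendre p j * INR j ^ (k - 1))) (Cpow q j))
              (Cminus (RtoC 1) (Cpow q j))))).

(* Main.v *)
Require Import Defs.
From Stdlib Require Import Reals Lra Lia List.
From Coquelicot Require Import Coquelicot.
Open Scope R_scope.

Lemma sum_n_split (u : nat -> R) (N : nat) :
  sum_n u (2 * N + 1) = sum_n (fun n => u (2 * n)%nat) N + sum_n (fun n => u (2 * n + 1)%nat) N.
Proof.
  induction N as [|N IH].
  - simpl. rewrite sum_Sn, !sum_O. reflexivity.
  - replace (2 * S N + 1)%nat with (S (S (2 * N + 1))) by lia.
    rewrite !sum_Sn, IH. unfold plus; simpl.
    replace (S (S (N + (N + 0) + 1))) with (2 * S N + 1)%nat by lia.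
    replace (S (N + (N + 0) + 1)) with (2 * S N)%nat by lia.
    replace (S (N + S (N + 0) + 1)) with (2 * S N + 1)%nat by lia.
    replace (S (N + S (N + 0))) with (2 * S N)%nat by lia.
    lra.
Qed.

Lemma series_pairs (u : nat -> R) (L : R) :
  is_series u L -> is_series (fun n => u (2 * n)%nat + u (2 * n + 1)%nat) L.
Proof.
  intros H.
  assert (Hl : is_lim_seq (sum_n u) L) by exact H.
  apply (is_lim_seq_subseq _ _ (fun N => 2 * N + 1)%nat) in Hl.
  2: { apply eventually_subseq. intros; lia. }
  unfold is_series.
  eapply is_lim_seq_ext in Hl. exact Hl.
  intros N. rewrite sum_n_split. symmetry. exact (sum_n_plus (fun n => u (2*n)%nat) (fun n => u (2*n+1)%nat) N).
Qed.

Lemma series_split (u : nat -> R) (A B : R) :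
  ex_series u -> is_series (fun n => u (2 * n)%nat) A ->
  is_series (fun n => u (2 * n + 1)%nat) B -> is_series u (A + B).
Proof.
  intros [L HL] HA HB.
  pose proof (series_pairs _ _ HL) as H1.
  pose proof (is_series_plus _ _ _ _ HA HB) as H2.
  apply is_series_unique in H1. apply is_series_unique in H2.
  change (plus A B) with (A + B) in H2.
  replace (A + B) with L; [exact HL|].
  rewrite <- H1, <- H2. reflexivity.
Qed.


Lemma ex_series_even (v : nat -> R) :
  ex_series (fun n => Rabs (v n)) -> ex_series (fun n => Rabs (v (2 * n)%nat)).
Proof.
  intros [L HL]. apply series_pairs in HL.
  apply (@ex_series_le R_AbsRing R_CompleteNormedModule _ (fun n => Rabs (v (2 * n)%nat) + Rabs (v (2 * n + 1)%nat))).
  - intros n. pose proof (Rabs_pos (v (2*n+1)%nat)).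
    unfold norm; simpl. unfold abs; simpl. rewrite Rabs_Rabsolu. simpl in *. lra.
  - exists L; exact HL.
Qed.

Lemma ex_series_odd (v : nat -> R) :
  ex_series (fun n => Rabs (v n)) -> ex_series (fun n => Rabs (v (2 * n + 1)%nat)).
Proof.
  intros [L HL]. apply series_pairs in HL.
  apply (@ex_series_le R_AbsRing R_CompleteNormedModule _ (fun n => Rabs (v (2 * n)%nat) + Rabs (v (2 * n + 1)%nat))).
  - intros n. pose proof (Rabs_pos (v (2*n)%nat)).
    unfold norm; simpl. unfold abs; simpl. rewrite Rabs_Rabsolu. simpl in *. lra.
  - exists L; exact HL.
Qed.
Definition cis (u : nat -> C) (l : C) :=
  is_series (fun n => Re (u n)) (Re l) /\ is_series (fun n => Im (u n)) (Im l).
Definition cabs (u : nat -> C) := ex_series (fun n => Cmod (u n)).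

Lemma im_le_Cmod (c : C) : Rabs (Im c) <= Cmod c.
Proof.
  pose proof (Cmod2_alt c). pose proof (Cmod_ge_0 c).
  pose proof (pow2_abs (Im c)). pose proof (Rabs_pos (Im c)).
  destruct (Rle_lt_dec (Rabs (Im c)) (Cmod c)); auto. nra.
Qed.

Lemma cis_CSeries u l : cis u l -> CSeries u = l.
Proof.
  intros [H1 H2]. unfold CSeries. apply is_series_unique in H1. apply is_series_unique in H2.
  rewrite H1, H2. destruct l; reflexivity.
Qed.

Lemma cabs_cis u : cabs u -> cis u (CSeries u).
Proof.
  intros H. unfold CSeries; split; simpl; apply Series_correct; apply ex_series_Rabs;
  apply (@ex_series_le R_AbsRing R_CompleteNormedModule _ (fun n => Cmod (u n))); try exact H; intros n;
  unfold norm; simpl; unfold abs; simpl; rewrite Rabs_Rabsolu.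
  apply re_le_Cmod. apply im_le_Cmod.
Qed.

Lemma cabs_even u : cabs u -> cabs (fun n => u (2 * n)%nat).
Proof.
  intros H. unfold cabs in *.
  assert (H' : ex_series (fun n => Rabs (Cmod (u n)))).
  { eapply ex_series_ext; [|exact H]. intros n. rewrite Rabs_pos_eq; auto. apply Cmod_ge_0. }
  apply ex_series_even in H'. eapply ex_series_ext; [|exact H'].
  intros n. cbv beta. rewrite Rabs_pos_eq; auto. apply Cmod_ge_0.
Qed.

Lemma cabs_odd u : cabs u -> cabs (fun n => u (2 * n + 1)%nat).
Proof.
  intros H. unfold cabs in *.
  assert (H' : ex_series (fun n => Rabs (Cmod (u n)))).
  { eapply ex_series_ext; [|exact H]. intros n. rewrite Rabs_pos_eq; auto. apply Cmod_ge_0. }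
  apply ex_series_odd in H'. eapply ex_series_ext; [|exact H'].
  intros n. cbv beta. rewrite Rabs_pos_eq; auto. apply Cmod_ge_0.
Qed.

Lemma cis_split u A B : cabs u -> cis (fun n => u (2 * n)%nat) A ->
  cis (fun n => u (2 * n + 1)%nat) B -> cis u (A + B)%C.
Proof.
  intros H [HA1 HA2] [HB1 HB2].
  destruct (cabs_cis u H) as [H1 H2].
  split; simpl.
  - apply series_split; auto. eexists; exact H1.
  - apply series_split; auto. eexists; exact H2.
Qed.

Lemma cis_ext u v l : (forall n, u n = v n) -> cis u l -> cis v l.
Proof.
  intros E [H1 H2]; split.
  - apply (is_series_ext (fun n => Re (u n))); [intros n; rewrite E; reflexivity | exact H1].
  - apply (is_series_ext (fun n => Im (u n))); [intros n; rewrite E; reflexivity | exact H2].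
Qed.

Lemma cis_plus u v l m : cis u l -> cis v m -> cis (fun n => (u n + v n)%C) (l + m)%C.
Proof.
  intros [H1 H2] [H3 H4]; split; simpl.
  - exact (is_series_plus _ _ _ _ H1 H3).
  - exact (is_series_plus _ _ _ _ H2 H4).
Qed.

Lemma cis_scal (c : C) u l : cis u l -> cis (fun n => (c * u n)%C) (c * l)%C.
Proof.
  intros [H1 H2]; split; simpl.
  - apply (is_series_minus _ _ _ _ (is_series_scal (Re c) _ _ H1) (is_series_scal (Im c) _ _ H2)).
  - apply (is_series_plus _ _ _ _ (is_series_scal (Re c) _ _ H2) (is_series_scal (Im c) _ _ H1)).
Qed.

Lemma cis_opp u l : cis u l -> cis (fun n => (- u n)%C) (- l)%C.
Proof.
  intros H. apply (cis_scal (-1)) in H.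
  replace (- l)%C with ((-1) * l)%C by ring.
  eapply cis_ext; [|exact H]. intros n; simpl. ring.
Qed.
Local Open Scope C_scope.

Definition Tm (a : nat -> R) (G : C -> C) (x : C) : nat -> C :=
  fun n => RtoC (a (S n)) * G (Cpow x (S n)).

Lemma Cpow_sq (x : C) n : Cpow (x * x) n = Cpow x (2 * n)%nat.
Proof. rewrite Cpow_mult_l, <- Cpow_add_r. f_equal. lia. Qed.

Lemma Cpow_opp_even (q : C) i : Cpow (- q) (2 * i)%nat = Cpow q (2 * i)%nat.
Proof.
  induction i as [|i IH]. reflexivity.
  replace (2 * S i)%nat with (S (S (2 * i)%nat)) by lia.
  rewrite !Cpow_S, IH. ring.
Qed.

Lemma Cpow_opp_odd (q : C) i : Cpow (- q) (S (2 * i)%nat) = - Cpow q (S (2 * i)%nat).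
Proof. rewrite !Cpow_S, Cpow_opp_even. ring. Qed.

Lemma Cmod_sq_lt (x : C) : Cmod x < 1 -> Cmod (x * x) < 1.
Proof. intros H. rewrite Cmod_mult. pose proof (Cmod_ge_0 x). nra. Qed.

Lemma Cmod_pow_lt (x : C) n : Cmod x < 1 -> Cmod (Cpow x (S n)) < 1.
Proof.
  intros H. rewrite Cmod_pow. pose proof (Cmod_ge_0 x).
  apply pow_lt_1_compat; [lra|lia].
Qed.

Section Abs.
Variables (a : nat -> R) (G : C -> C) (c d : R).
Hypothesis Ha : forall m, a (S (2 * m + 1)%nat) = (c * a (S m))%R.
Hypothesis HG : forall y, Cmod y < 1 -> G (- y) = - G y + RtoC d * G (y * y).
Hypothesis Hconv : forall x, Cmod x < 1 -> cabs (Tm a G x).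

Let SS x := CSeries (Tm a G x).
Let OO x := CSeries (fun i => Tm a G x (2 * i)%nat).

Lemma odd_part x : (forall i, Tm a G x (2 * i + 1)%nat = RtoC c * Tm a G (x * x) i).
Proof.
  intros i. unfold Tm. rewrite Ha, Cpow_sq, RtoC_mult.
  replace (S (2 * i + 1)%nat) with (2 * S i)%nat by lia. ring.
Qed.

Lemma S_decomp x : Cmod x < 1 -> SS x = OO x + RtoC c * SS (x * x).
Proof.
  intros Hx. unfold SS, OO. apply cis_CSeries. apply cis_split; auto.
  - apply cabs_cis, cabs_even; auto.
  - eapply cis_ext. intros i; symmetry; apply odd_part.
    apply cis_scal. apply cabs_cis; auto. apply Hconv, Cmod_sq_lt; auto.
Qed.

Lemma S_neg q : Cmod q < 1 ->
  SS (- q) = - SS q + RtoC (2 * c + d)%R * SS (q * q) + RtoC (- (c * d))%R * SS ((q * q) * (q * q)).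
Proof.
  intros Hq.
  assert (Hq2 : Cmod (q * q) < 1) by (apply Cmod_sq_lt; auto).
  assert (E1 : SS (- q) = (- OO q + RtoC d * OO (q * q)) + RtoC c * SS (q * q)).
  { unfold SS, OO. apply cis_CSeries. apply cis_split.
    - apply Hconv. rewrite Cmod_opp; auto.
    - eapply cis_ext.
      2: { apply cis_plus. apply cis_opp. apply cabs_cis, cabs_even, Hconv; auto.
           apply cis_scal. apply cabs_cis, cabs_even, Hconv; auto. }
      intros i. unfold Tm.
      replace (S (2 * i)%nat) with (S (2 * i)%nat) by reflexivity.
      rewrite Cpow_opp_odd, HG by (apply Cmod_pow_lt; auto).
      rewrite Cpow_sq.
      replace (Cpow q (S (2 * i)%nat) * Cpow q (S (2 * i)%nat)) with (Cpow q (2 * S (2 * i))%nat).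
      2: { rewrite <- Cpow_add_r. f_equal. lia. }
      ring.
    - eapply cis_ext. 2: { apply cis_scal. apply cabs_cis, Hconv; auto. }
      intros i. cbv beta. rewrite <- (odd_part q). unfold Tm.
      replace (S (2 * i + 1)%nat) with (2 * S i)%nat by lia.
      rewrite Cpow_opp_even. reflexivity. }
  rewrite E1.
  assert (E2 := S_decomp q Hq). assert (E3 := S_decomp (q * q) Hq2).
  assert (OO q = SS q - RtoC c * SS (q * q)) as -> by (rewrite E2; ring).
  assert (OO (q * q) = SS (q * q) - RtoC c * SS (q * q * (q * q))) as -> by (rewrite E3; ring).
  rewrite RtoC_opp, RtoC_plus, !RtoC_mult. ring.
Qed.
End Abs.
Local Open Scope R_scope.

Lemma lim_inv_n : is_lim_seq (fun n => / INR (S n)) 0.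
Proof.
  assert (H : is_lim_seq (fun n => INR (S n)) p_infty).
  { apply (is_lim_seq_incr_1 INR). apply is_lim_seq_INR. }
  apply is_lim_seq_inv in H; [|discriminate]. exact H.
Qed.

Lemma lim_ratio m : is_lim_seq (fun n => (1 + / INR (S n)) ^ m) 1.
Proof.
  induction m as [|m IH].
  - simpl. apply is_lim_seq_const.
  - simpl. assert (H := is_lim_seq_plus' _ _ _ _ (is_lim_seq_const 1) lim_inv_n).
    rewrite Rplus_0_r in H. assert (H2 := is_lim_seq_mult' _ _ _ _ H IH).
    rewrite Rmult_1_l in H2. exact H2.
Qed.

Lemma polygeom m r : 0 <= r < 1 -> ex_series (fun n => INR (S n) ^ m * r ^ (S n)).
Proof.
  intros [H0 H1]. destruct (Req_dec r 0) as [Hr|Hr].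
  - subst. apply (ex_series_ext (fun n => scal 0 ((1/2)^n))).
    intros n; unfold scal; simpl; unfold mult; simpl; ring.
    apply (@ex_series_scal R_AbsRing R_NormedModule). eexists; apply is_series_geom; rewrite Rabs_pos_eq; lra.
  - apply ex_series_Rabs. apply (ex_series_DAlembert _ r); [lra| |].
    + intros n. apply Rmult_integral_contrapositive_currified; apply pow_nonzero; auto.
      apply not_0_INR; lia.
    + apply (is_lim_seq_ext (fun n => (1 + / INR (S n)) ^ m * r)).
      2: { assert (H := is_lim_seq_mult' _ _ _ _ (lim_ratio m) (is_lim_seq_const r)).
           rewrite Rmult_1_l in H. exact H. }
      intros n. assert (Hx : INR (S n) <> 0) by (apply not_0_INR; lia).
      assert (Hp : 0 < INR (S n)) by (apply lt_0_INR; lia).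
      assert (E : INR (S (S n)) ^ m * r ^ S (S n) = ((1 + / INR (S n)) ^ m * r) * (INR (S n) ^ m * r ^ S n)).
      { rewrite (S_INR (S n)).
        replace (((1 + / INR (S n)) ^ m * r) * (INR (S n) ^ m * r ^ S n))
          with (((1 + / INR (S n)) * INR (S n)) ^ m * r ^ S (S n)).
        2: { rewrite Rpow_mult_distr. simpl. ring. }
        f_equal. f_equal. field. auto. }
      rewrite E. symmetry.
      replace (((1 + / INR (S n)) ^ m * r) * (INR (S n) ^ m * r ^ S n) / (INR (S n) ^ m * r ^ S n))
        with ((1 + / INR (S n)) ^ m * r) by (field; split; apply pow_nonzero; auto).
      apply Rabs_pos_eq.
      apply Rmult_le_pos; auto. apply pow_le. assert (0 < / INR (S n)) by (apply Rinv_0_lt_compat; lra). lra.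
Qed.

Lemma conv_gen (a : nat -> R) (G : C -> C) (m : nat) (K : R) :
  0 <= K -> (forall j, Rabs (a j) <= INR j ^ m) ->
  (forall y, Cmod y < 1 -> Cmod (G y) <= K * Cmod y / (1 - Cmod y)) ->
  forall x, Cmod x < 1 -> cabs (Tm a G x).
Proof.
  intros HK Ha HG x Hx. unfold cabs, Tm.
  set (r := Cmod x). assert (Hr0 : 0 <= r) by apply Cmod_ge_0. assert (Hr1 : r < 1) by exact Hx.
  apply (@ex_series_le R_AbsRing R_CompleteNormedModule _
          (fun n => (K / (1 - r)) * (INR (S n) ^ m * r ^ S n))).
  - intros n. change (Rabs (Cmod (RtoC (a (S n)) * G (Cpow x (S n)))%C) <= K / (1 - r) * (INR (S n) ^ m * r ^ S n)).
    rewrite Rabs_pos_eq by apply Cmod_ge_0.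
    rewrite Cmod_mult, Cmod_R.
    assert (Hy : Cmod (Cpow x (S n)) < 1) by (apply Cmod_pow_lt; auto).
    pose proof (HG _ Hy) as HGy. rewrite Cmod_pow in HGy. fold r in HGy.
    set (y := r ^ S n) in *.
    assert (Hy0 : 0 <= y) by (apply pow_le; auto).
    assert (Hrn : y <= r).
    { unfold y. rewrite <- tech_pow_Rmult. apply Rle_trans with (r * 1); [|lra].
      apply Rmult_le_compat_l; auto.
      rewrite <- (pow1 n). apply pow_incr. lra. }
    assert (H3 : K * y / (1 - y) <= K / (1 - r) * y).
    { unfold Rdiv. replace (K * / (1 - r) * y) with ((K * y) * / (1 - r)) by ring.
      apply Rmult_le_compat_l. apply Rmult_le_pos; auto.
      apply Rinv_le_contravar; lra. }
    pose proof (Ha (S n)) as Han.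
    replace (K / (1 - r) * (INR (S n) ^ m * y)) with (INR (S n) ^ m * (K / (1 - r) * y)) by ring.
    apply Rmult_le_compat; auto using Rabs_pos, Cmod_ge_0. lra.
  - apply (ex_series_ext (fun n => scal (K / (1 - r)) (INR (S n) ^ m * r ^ S n))).
    intros n; reflexivity.
    apply (@ex_series_scal R_AbsRing R_NormedModule). apply polygeom. lra.
Qed.

Lemma qC_half tau : qC (Cplus tau (RtoC (1/2))) = Copp (qC tau).
Proof.
  destruct tau as [x y]. unfold qC. simpl.
  replace (2 * PI * (x + 1 / 2)) with (2 * PI * x + PI) by field.
  rewrite neg_cos, neg_sin.
  rewrite Rplus_0_r. apply injective_projections; simpl; ring.
Qed.

Lemma qC_double z : qC (Cmult (RtoC 2) z) = Cmult (qC z) (qC z).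
Proof.
  destruct z as [x y]. unfold qC. simpl.
  replace (2 * PI * (2 * y + 0 * x)) with (2 * PI * y + 2 * PI * y) by ring.
  replace (2 * PI * (2 * x - 0 * y)) with (2 * (2 * PI * x)) by ring.
  replace (- (2 * PI * y + 2 * PI * y)) with (- (2 * PI * y) + - (2 * PI * y)) by ring.
  rewrite exp_plus, cos_2a, sin_2a.
  apply injective_projections; simpl; ring.
Qed.

Lemma qC_mod tau : 0 < Im tau -> Cmod (qC tau) < 1.
Proof.
  intros H. unfold qC. rewrite Cmod_mult, Cmod_R.
  assert (E : Cmod (cos (2 * PI * Re tau), sin (2 * PI * Re tau)) = 1).
  { unfold Cmod. cbn [fst snd].
    pose proof (sin2_cos2 (2 * PI * Re tau)) as H0. unfold Rsqr in H0.
    replace (cos (2 * PI * Re tau) ^ 2 + sin (2 * PI * Re tau) ^ 2) with 1 by nra.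
    apply sqrt_1. }
  rewrite E, Rmult_1_r, Rabs_pos_eq by (left; apply exp_pos).
  rewrite <- exp_0. apply exp_increasing.
  pose proof PI_RGT_0. nra.
Qed.

Lemma CSeries_ext u v : (forall n, u n = v n) -> CSeries u = CSeries v.
Proof.
  intros E. unfold CSeries. f_equal; apply Series_ext; intros n; rewrite E; reflexivity.
Qed.

Lemma Cmod_one_minus y : 1 - Cmod y <= Cmod (Cminus (RtoC 1) y).
Proof.
  pose proof (Cmod_triangle (Cminus (RtoC 1) y) y) as H.
  replace (Cplus (Cminus (RtoC 1) y) y) with (RtoC 1) in H by ring.
  rewrite Cmod_1 in H. lra.
Qed.

Lemma one_minus_nz y : Cmod y < 1 -> Cminus (RtoC 1) y <> RtoC 0.
Proof.
  intros H E. pose proof (Cmod_one_minus y). rewrite E, Cmod_0 in H0. lra.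
Qed.

Definition Geis (y : C) : C := Cdiv y (Cminus (RtoC 1) y).

Lemma HG_eis y : Cmod y < 1 -> Geis (Copp y) = Cplus (Copp (Geis y)) (Cmult (RtoC 2) (Geis (Cmult y y))).
Proof.
  intros H. unfold Geis.
  pose proof (one_minus_nz y H) as H1.
  assert (H2 := one_minus_nz (Copp y)). rewrite Cmod_opp in H2. specialize (H2 H).
  assert (H3 := one_minus_nz (Cmult y y) (Cmod_sq_lt y H)).
  field. repeat split; auto.
Qed.

Lemma bound_eis y : Cmod y < 1 -> Cmod (Geis y) <= 1 * Cmod y / (1 - Cmod y).
Proof.
  intros H. unfold Geis, Cdiv. pose proof (one_minus_nz y H) as Hn.
  rewrite Cmod_mult, Cmod_inv by auto.
  pose proof (Cmod_one_minus y). pose proof (Cmod_ge_0 y).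
  unfold Rdiv. rewrite Rmult_1_l. apply Rmult_le_compat_l; auto.
  apply Rinv_le_contravar; lra.
Qed.

Lemma final_alg (C0 Kc Fh F1 F2 F4 : C) (c d A B : R) :
  Fh = Cplus (Cplus (Copp F1) (Cmult (RtoC (2 * c + d)) F2)) (Cmult (RtoC (- (c * d))) F4) ->
  2 * c + d = A -> - (c * d) = B ->
  C0 = Cplus (Cplus (Copp C0) (Cmult (RtoC A) C0)) (Cmult (RtoC B) C0) ->
  Cminus C0 (Cmult Kc Fh) =
  Cplus (Cplus (Copp (Cminus C0 (Cmult Kc F1))) (Cmult (RtoC A) (Cminus C0 (Cmult Kc F2))))
        (Cmult (RtoC B) (Cminus C0 (Cmult Kc F4))).
Proof.
  intros HF HA HB HC. subst A B. rewrite HF. rewrite HC at 1. ring.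
Qed.

Lemma t4_eq tau : Cmult (RtoC 4) tau = Cmult (RtoC 2) (Cmult (RtoC 2) tau).
Proof. rewrite Cmult_assoc, <- RtoC_mult. replace (2 * 2) with 4 by ring. reflexivity. Qed.

Definition aE (w j : nat) : R := INR j ^ (w - 1).

Lemma Eis_repr w tau : Eis w tau =
  Cminus (RtoC 1) (Cmult (RtoC (2 * INR w / bernoulli w)) (CSeries (Tm (aE w) Geis (qC tau)))).
Proof.
  unfold Eis. cbv zeta. f_equal. f_equal. apply CSeries_ext. intros n.
  unfold Tm, Geis, aE, Cdiv. ring.
Qed.

Lemma INR_double m : INR (S (2 * m + 1)) = 2 * INR (S m).
Proof. rewrite !S_INR, plus_INR, mult_INR. simpl. ring. Qed.

Lemma part1 (tau : C) (Htau : 0 < Im tau) (k : nat) : (1 <= k)%nat ->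
  Eis (2 * k) (Cplus tau (RtoC (1/2))) =
       Cplus (Cplus (Copp (Eis (2 * k) tau))
                    (Cmult (RtoC (2 ^ (2 * k) + 2)) (Eis (2 * k) (Cmult (RtoC 2) tau))))
             (Copp (Cmult (RtoC (2 ^ (2 * k))) (Eis (2 * k) (Cmult (RtoC 4) tau)))).
Proof.
  intros Hk. set (w := (2 * k)%nat).
  rewrite t4_eq, !Eis_repr, qC_half, !qC_double.
  pose proof (qC_mod tau Htau) as Hq.
  assert (Hw : (2 * k = S (w - 1))%nat) by (unfold w; lia).
  etransitivity.
  { eapply final_alg with (c := 2 ^ (w - 1)) (d := 2) (A := 2 ^ (2 * k) + 2) (B := - 2 ^ (2 * k)).
    - apply S_neg; auto.
      + intros m. unfold aE. rewrite INR_double, Rpow_mult_distr. ring.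
      + apply HG_eis.
      + apply (conv_gen _ _ (w - 1) 1); [lra| |apply bound_eis].
        intros j. unfold aE. rewrite Rabs_pos_eq; [lra|]. apply pow_le, pos_INR.
    - rewrite Hw. simpl. ring.
    - rewrite Hw. simpl. ring.
    - apply injective_projections; simpl; ring. }
  unfold w. rewrite RtoC_opp. ring.
Qed.

Lemma csum_ext a n f g : (forall l, f l = g l) -> csum a n f = csum a n g.
Proof.
  intros E. unfold csum. f_equal. apply map_ext. auto.
Qed.

Lemma csum_bound a n f B : (forall l, (a <= l)%nat -> Cmod (f l) <= B) ->
  Cmod (csum a n f) <= INR n * B.
Proof.
  revert a. induction n as [|n IH]; intros a Hf.
  - unfold csum; simpl. rewrite Cmod_0. lra.
  - unfold csum; cbn [seq map fold_right]. fold (csum (S a) n f).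
    pose proof (Cmod_triangle (f a) (csum (S a) n f)).
    assert (H1 := Hf a (le_n a)).
    assert (H2 : Cmod (csum (S a) n f) <= INR n * B) by (apply IH; intros; apply Hf; lia).
    rewrite S_INR. lra.
Qed.

Lemma legendre_abs p j : Rabs (legendre p j) <= 1.
Proof.
  unfold legendre. destruct (Nat.eqb _ _); [|destruct (existsb _ _)];
  unfold Rabs; destruct (Rcase_abs _); lra.
Qed.

Lemma legendre_mod p j : p <> 0%nat -> legendre p j = legendre p (j mod p).
Proof. intros Hp. unfold legendre. rewrite Nat.Div0.mod_mod by auto. reflexivity. Qed.

Lemma legendre_double p eps : p <> 0%nat ->
  (forall r, (r < p)%nat -> legendre p (2 * r) = eps * legendre p r) ->
  forall n, legendre p (2 * n) = eps * legendre p n.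
Proof.
  intros Hp H n. rewrite (legendre_mod p (2 * n)), <- Nat.Div0.mul_mod_idemp_r, <- legendre_mod by auto.
  rewrite H by (apply Nat.mod_upper_bound; auto). rewrite <- legendre_mod; auto.
Qed.

Definition NN (p : nat) (y : C) : C := csum 1 (p - 1) (fun l => Cmult (RtoC (legendre p l)) (Cpow y l)).
Definition G0 (p : nat) (y : C) : C := Cmult (Cinv (Cminus (RtoC 1) (Cpow y p))) (NN p y).

Lemma RtoC_m1 : RtoC (-1) = Copp (RtoC 1). Proof. apply injective_projections; simpl; ring. Qed.

Lemma alg0 (Y Nm N N2 d : C) : Cminus (RtoC 1) Y <> RtoC 0 -> Cminus (RtoC 1) (Copp Y) <> RtoC 0 ->
  Cmult Nm (Cminus (RtoC 1) Y) = Cplus (Copp (Cmult N (Cplus (RtoC 1) Y))) (Cmult d N2) ->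
  Cmult (Cinv (Cminus (RtoC 1) (Copp Y))) Nm =
  Cplus (Copp (Cmult (Cinv (Cminus (RtoC 1) Y)) N))
        (Cmult d (Cmult (Cinv (Cminus (RtoC 1) (Cmult Y Y))) N2)).
Proof.
  intros H1 H2 H.
  assert (H3 : Cminus (RtoC 1) (Cmult Y Y) <> RtoC 0).
  { replace (Cminus (RtoC 1) (Cmult Y Y)) with (Cmult (Cminus (RtoC 1) Y) (Cminus (RtoC 1) (Copp Y))) by ring.
    intros E. apply H2.
    replace (Cminus (RtoC 1) (Copp Y)) with (Cmult (Cinv (Cminus (RtoC 1) Y)) (Cmult (Cminus (RtoC 1) Y) (Cminus (RtoC 1) (Copp Y)))) by (field; auto).
    rewrite E. ring. }
  assert (E : Nm = Cdiv (Cplus (Copp (Cmult N (Cplus (RtoC 1) Y))) (Cmult d N2)) (Cminus (RtoC 1) Y)).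
  { rewrite <- H. field. auto. }
  rewrite E. field. repeat split; auto.
Qed.

Lemma HG_0 p i d : p = S (2 * i) ->
  (forall y, Cmult (NN p (Copp y)) (Cminus (RtoC 1) (Cpow y p)) =
             Cplus (Copp (Cmult (NN p y) (Cplus (RtoC 1) (Cpow y p)))) (Cmult (RtoC d) (NN p (Cmult y y)))) ->
  forall y, Cmod y < 1 -> G0 p (Copp y) = Cplus (Copp (G0 p y)) (Cmult (RtoC d) (G0 p (Cmult y y))).
Proof.
  intros Hp Hpoly y Hy. unfold G0.
  rewrite Hp, Cpow_opp_odd, Cpow_mult_l, <- Hp.
  apply alg0.
  - apply one_minus_nz. rewrite Hp. apply Cmod_pow_lt; auto.
  - apply one_minus_nz. rewrite Cmod_opp, Hp. apply Cmod_pow_lt; auto.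
  - apply Hpoly.
Qed.

Lemma bound_0 p y : Cmod y < 1 -> (1 <= p)%nat ->
  Cmod (G0 p y) <= INR (p - 1) * Cmod y / (1 - Cmod y).
Proof.
  intros Hy Hp. unfold G0.
  pose proof (Cmod_ge_0 y) as Hy0.
  assert (Hyp : Cmod (Cpow y p) <= Cmod y).
  { destruct p as [|p]; [lia|]. rewrite Cmod_pow, <- tech_pow_Rmult.
    apply Rle_trans with (Cmod y * 1); [|lra]. apply Rmult_le_compat_l; auto.
    rewrite <- (pow1 p). apply pow_incr. lra. }
  assert (Hn : Cminus (RtoC 1) (Cpow y p) <> RtoC 0).
  { apply one_minus_nz. lra. }
  rewrite Cmod_mult, Cmod_inv by auto.
  assert (HN : Cmod (NN p y) <= INR (p - 1) * Cmod y).
  { apply csum_bound. intros l Hl. rewrite Cmod_mult, Cmod_R, Cmod_pow.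
    pose proof (legendre_abs p l).
    assert (Cmod y ^ l <= Cmod y).
    { destruct l as [|l]; [lia|]. rewrite <- tech_pow_Rmult.
      apply Rle_trans with (Cmod y * 1); [|lra]. apply Rmult_le_compat_l; auto.
      rewrite <- (pow1 l). apply pow_incr. lra. }
    assert (0 <= Cmod y ^ l) by (apply pow_le; auto).
    pose proof (Rabs_pos (legendre p l)). nra. }
  pose proof (Cmod_one_minus (Cpow y p)).
  assert (Hi : / Cmod (Cminus (RtoC 1) (Cpow y p)) <= / (1 - Cmod y)) by (apply Rinv_le_contravar; lra).
  assert (0 <= / (1 - Cmod y)) by (left; apply Rinv_0_lt_compat; lra).
  pose proof (Cmod_ge_0 (NN p y)).
  assert (0 <= / Cmod (Cminus (RtoC 1) (Cpow y p))) by (left; apply Rinv_0_lt_compat; lra).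
  unfold Rdiv. rewrite Rmult_comm.
  apply Rmult_le_compat; auto.
Qed.

Lemma Eis0_repr k p tau : Eis0 k p tau =
  Cminus (RtoC (if Nat.eqb k 1 then 1 else 0))
    (Cmult (RtoC (2 * INR k / bernoulli_chi k p)) (CSeries (Tm (aE k) (G0 p) (qC tau)))).
Proof.
  unfold Eis0. cbv zeta. f_equal. f_equal. apply CSeries_ext. intros n.
  unfold Tm, G0, NN, aE. rewrite (Nat.mul_comm p (S n)), Cpow_mult_r.
  rewrite (csum_ext _ _ _ (fun l => Cmult (RtoC (legendre p l)) (Cpow (Cpow (qC tau) (S n)) l))).
  2: { intros l. rewrite Cpow_mult_r. reflexivity. }
  unfold Cdiv. ring.
Qed.

Definition aI (p k j : nat) : R := legendre p j * INR j ^ (k - 1).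

Lemma EisInf_repr k p tau : EisInf k p tau =
  Cminus (RtoC 1)
    (Cmult (RtoC (2 * INR k / bernoulli_chi k p)) (CSeries (Tm (aI p k) Geis (qC tau)))).
Proof.
  unfold EisInf. cbv zeta. f_equal. f_equal. apply CSeries_ext. intros n.
  unfold Tm, Geis, aI, Cdiv. ring.
Qed.

Lemma part_chi (p i : nat) (eps : R) (Hp : p = S (2 * i))
  (HL : forall n, legendre p (2 * n) = eps * legendre p n)
  (Hpoly : forall y, Cmult (NN p (Copp y)) (Cminus (RtoC 1) (Cpow y p)) =
             Cplus (Copp (Cmult (NN p y) (Cplus (RtoC 1) (Cpow y p)))) (Cmult (RtoC (2 * eps)) (NN p (Cmult y y))))
  (tau : C) (Htau : 0 < Im tau) (k : nat) (A0 B0 AI BI : R)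
  (HA0 : A0 = 2 ^ (2 * k + 1) + 2 * eps) (HB0 : B0 = - (2 ^ (2 * k + 1) * eps))
  (HAI : AI = eps * 2 ^ (2 * k + 1) + 2) (HBI : BI = - (eps * 2 ^ (2 * k + 1))) :
  Eis0 (2 * k + 1) p (Cplus tau (RtoC (1/2))) =
    Cplus (Cplus (Copp (Eis0 (2 * k + 1) p tau))
                 (Cmult (RtoC A0) (Eis0 (2 * k + 1) p (Cmult (RtoC 2) tau))))
          (Cmult (RtoC B0) (Eis0 (2 * k + 1) p (Cmult (RtoC 4) tau))) /\
  EisInf (2 * k + 1) p (Cplus tau (RtoC (1/2))) =
    Cplus (Cplus (Copp (EisInf (2 * k + 1) p tau))
                 (Cmult (RtoC AI) (EisInf (2 * k + 1) p (Cmult (RtoC 2) tau))))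
          (Cmult (RtoC BI) (EisInf (2 * k + 1) p (Cmult (RtoC 4) tau))).
Proof.
  pose proof (qC_mod tau Htau) as Hq.
  assert (Hk : (2 * k + 1 - 1 = 2 * k)%nat) by lia.
  assert (Hk2 : (2 * k + 1 = S (2 * k))%nat) by lia.
  split.
  - rewrite t4_eq, !Eis0_repr, qC_half, !qC_double.
    eapply final_alg with (c := 2 ^ (2 * k)) (d := 2 * eps).
    + apply S_neg; auto.
      * intros m. unfold aE. rewrite INR_double, Rpow_mult_distr, Hk. ring.
      * apply (HG_0 p i); auto.
      * apply (conv_gen _ _ (2 * k + 1 - 1) (INR (p - 1))); [apply pos_INR| |].
        -- intros j. unfold aE. rewrite Rabs_pos_eq; [lra|]. apply pow_le, pos_INR.
        -- intros y Hy. apply bound_0; auto. lia.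
    + rewrite HA0, Hk2. simpl. ring.
    + rewrite HB0, Hk2. simpl. ring.
    + destruct (Nat.eqb (2 * k + 1) 1) eqn:E.
      * apply Nat.eqb_eq in E. assert (k = 0%nat) by lia. subst k.
        rewrite HA0, HB0. apply injective_projections; simpl; ring.
      * apply injective_projections; simpl; ring.
  - rewrite t4_eq, !EisInf_repr, qC_half, !qC_double.
    eapply final_alg with (c := eps * 2 ^ (2 * k)) (d := 2).
    + apply S_neg; auto.
      * intros m. unfold aI.
        replace (S (2 * m + 1)) with (2 * S m)%nat at 1 by lia.
        rewrite HL, INR_double, Rpow_mult_distr, Hk. ring.
      * apply HG_eis.
      * apply (conv_gen _ _ (2 * k + 1 - 1) 1); [lra| |apply bound_eis].
        intros j. unfold aI. rewrite Rabs_mult.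
        pose proof (legendre_abs p j). pose proof (Rabs_pos (legendre p j)).
        rewrite (Rabs_pos_eq (INR j ^ _)) by (apply pow_le, pos_INR).
        assert (0 <= INR j ^ (2 * k + 1 - 1)) by (apply pow_le, pos_INR). nra.
    + rewrite HAI, Hk2. simpl. ring.
    + rewrite HBI, Hk2. simpl. ring.
    + rewrite HAI, HBI. apply injective_projections; simpl; ring.
Qed.

Ltac fincheck := intros r Hr; repeat (destruct r as [|r]; [unfold legendre; simpl; lra | try (exfalso; lia)]).

Lemma HL3 : forall n, legendre 3 (2 * n) = -1 * legendre 3 n.
Proof. apply legendre_double; [discriminate|]. fincheck. Qed.
Lemma HL11 : forall n, legendre 11 (2 * n) = -1 * legendre 11 n.
Proof. apply legendre_double; [discriminate|]. fincheck. Qed.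
Lemma HL7 : forall n, legendre 7 (2 * n) = 1 * legendre 7 n.
Proof. apply legendre_double; [discriminate|]. fincheck. Qed.
Lemma HL23 : forall n, legendre 23 (2 * n) = 1 * legendre 23 n.
Proof. apply legendre_double; [discriminate|]. fincheck. Qed.

Lemma RtoC_m2 : RtoC (2 * -1) = Copp (RtoC 2). Proof. apply injective_projections; simpl; ring. Qed.
Lemma RtoC_p2 : RtoC (2 * 1) = RtoC 2. Proof. f_equal. ring. Qed.

Ltac polycheck := intros y; rewrite ?RtoC_m2, ?RtoC_p2; unfold NN, csum, legendre; simpl; rewrite ?RtoC_m1; ring.

Lemma Hpoly3 : forall y, Cmult (NN 3 (Copp y)) (Cminus (RtoC 1) (Cpow y 3)) =
  Cplus (Copp (Cmult (NN 3 y) (Cplus (RtoC 1) (Cpow y 3)))) (Cmult (RtoC (2 * -1)) (NN 3 (Cmult y y))).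
Proof. polycheck. Qed.
Lemma Hpoly11 : forall y, Cmult (NN 11 (Copp y)) (Cminus (RtoC 1) (Cpow y 11)) =
  Cplus (Copp (Cmult (NN 11 y) (Cplus (RtoC 1) (Cpow y 11)))) (Cmult (RtoC (2 * -1)) (NN 11 (Cmult y y))).
Proof. polycheck. Qed.
Lemma Hpoly7 : forall y, Cmult (NN 7 (Copp y)) (Cminus (RtoC 1) (Cpow y 7)) =
  Cplus (Copp (Cmult (NN 7 y) (Cplus (RtoC 1) (Cpow y 7)))) (Cmult (RtoC (2 * 1)) (NN 7 (Cmult y y))).
Proof. polycheck. Qed.
Lemma Hpoly23 : forall y, Cmult (NN 23 (Copp y)) (Cminus (RtoC 1) (Cpow y 23)) =
  Cplus (Copp (Cmult (NN 23 y) (Cplus (RtoC 1) (Cpow y 23)))) (Cmult (RtoC (2 * 1)) (NN 23 (Cmult y y))).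
Proof. polycheck. Qed.

Theorem lemma3p2 (tau : C) (Htau : 0 < Im tau) :
  let th := Cplus tau (RtoC (1/2)) in
  let t2 := Cmult (RtoC 2) tau in
  let t4 := Cmult (RtoC 4) tau in
  (forall k : nat, (1 <= k)%nat ->
     Eis (2 * k) th =
       Cplus (Cplus (Copp (Eis (2 * k) tau))
                    (Cmult (RtoC (2 ^ (2 * k) + 2)) (Eis (2 * k) t2)))
             (Copp (Cmult (RtoC (2 ^ (2 * k))) (Eis (2 * k) t4)))) /\
  (forall p : nat, (p = 3 \/ p = 11)%nat -> forall k : nat,
     Eis0 (2 * k + 1) p th =
       Cplus (Cplus (Copp (Eis0 (2 * k + 1) p tau))
                    (Cmult (RtoC (2 ^ (2 * k + 1) - 2)) (Eis0 (2 * k + 1) p t2)))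
             (Cmult (RtoC (2 ^ (2 * k + 1))) (Eis0 (2 * k + 1) p t4)) /\
     EisInf (2 * k + 1) p th =
       Cplus (Cplus (Copp (EisInf (2 * k + 1) p tau))
                    (Cmult (RtoC (2 - 2 ^ (2 * k + 1))) (EisInf (2 * k + 1) p t2)))
             (Cmult (RtoC (2 ^ (2 * k + 1))) (EisInf (2 * k + 1) p t4))) /\
  (forall p : nat, (p = 7 \/ p = 23)%nat -> forall k : nat,
     Eis0 (2 * k + 1) p th =
       Cplus (Cplus (Copp (Eis0 (2 * k + 1) p tau))
                    (Cmult (RtoC (2 ^ (2 * k + 1) + 2)) (Eis0 (2 * k + 1) p t2)))
             (Copp (Cmult (RtoC (2 ^ (2 * k + 1))) (Eis0 (2 * k + 1) p t4))) /\
     EisInf (2 * k + 1) p th =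
       Cplus (Cplus (Copp (EisInf (2 * k + 1) p tau))
                    (Cmult (RtoC (2 ^ (2 * k + 1) + 2)) (EisInf (2 * k + 1) p t2)))
             (Copp (Cmult (RtoC (2 ^ (2 * k + 1))) (EisInf (2 * k + 1) p t4)))).
Proof.
  cbv zeta. split; [|split].
  - intros k Hk. apply part1; auto.
  - intros p [-> | ->] k.
    + apply (part_chi 3 1 (-1) eq_refl HL3 Hpoly3 tau Htau k); ring.
    + apply (part_chi 11 5 (-1) eq_refl HL11 Hpoly11 tau Htau k); ring.
  - intros p [-> | ->] k.
    + destruct (part_chi 7 3 1 eq_refl HL7 Hpoly7 tau Htau k
                  (2 ^ (2 * k + 1) + 2) (- 2 ^ (2 * k + 1)) (2 ^ (2 * k + 1) + 2) (- 2 ^ (2 * k + 1)))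
        as [H1 H2]; try ring.
      split; [rewrite H1 | rewrite H2]; rewrite RtoC_opp; ring.
    + destruct (part_chi 23 11 1 eq_refl HL23 Hpoly23 tau Htau k
                  (2 ^ (2 * k + 1) + 2) (- 2 ^ (2 * k + 1)) (2 ^ (2 * k + 1) + 2) (- 2 ^ (2 * k + 1)))
        as [H1 H2]; try ring.
      split; [rewrite H1 | rewrite H2]; rewrite RtoC_opp; ring.
Qed.
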